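(* Let $\Gamma=(V,E)$ be a graph. If for each $v\in V$ the monoid $M_v$ is embeddable in a group $G_v$, then the graph product $\Gamma_{v\in V}M_v$ is embeddable in the group $\Gamma_{v\in V}G_v$.
   Context: A graph $\Gamma=(V,E)$ has vertex set $V$ and irreflexive symmetric edge relation $E$. The graph product $\Gamma_{v\in V}M_v$ of pairwise disjoint monoids $M_v$ is the quotient of their free product by the congruence generated by all pairs $(mn,nm)$ with $m\in M_u$, $n\in M_v$, $(u,v)\in E$ (for groups this is the usual graph product of groups). *)

(* Defs.v *)
From Stdlib Require Import List.
Import ListNotations.


Record monoid := Monoid {
  mcar :> Type;
  mop : mcar -> mcar -> mcar;
  mone : mcar;
  massoc : forall x y z, mop x (mop y z) = mop (mop x y) z;
  mone_l : forall x, mop mone x = x;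
  mone_r : forall x, mop x mone = x
}.
Arguments mop {m} _ _.
Arguments mone m : assert.

Definition is_group (G : monoid) : Prop :=
  forall x : G, exists y : G, mop x y = mone G /\ mop y x = mone G.

Definition monoid_hom (M N : monoid) (f : M -> N) : Prop :=
  f (mone M) = mone N /\ forall x y : M, f (mop x y) = mop (f x) (f y).

Definition monoid_embeddable (M N : monoid) : Prop :=
  exists f : M -> N, monoid_hom M N f /\ (forall x y, f x = f y -> x = y).

Definition is_graph {V : Type} (E : V -> V -> Prop) : Prop :=
  (forall v, ~ E v v) /\ (forall u v, E u v -> E v u).

(* Words in the free monoid on the disjoint union of the M_v
   (disjointness is built in via the dependent pair). *)
Definition gword (V : Type) (M : V -> monoid) := list {v : V & M v}.

(* Defining relations: those of the free product (units of the factors are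
   trivial, adjacent letters from the same factor multiply), plus the
   commutation relations mn = nm for m in M_u, n in M_v, (u,v) in E. *)
Inductive gp_basic {V : Type} (E : V -> V -> Prop) (M : V -> monoid)
  : gword V M -> gword V M -> Prop :=
| gpb_one v : gp_basic E M [existT _ v (mone (M v))] []
| gpb_mul v (a b : M v) :
    gp_basic E M [existT _ v a; existT _ v b] [existT _ v (mop a b)]
| gpb_comm u v (m : M u) (n : M v) :
    E u v -> gp_basic E M [existT _ u m; existT _ v n] [existT _ v n; existT _ u m].

(* The congruence on the free monoid generated by gp_basic.  The graph
   product of the M_v is the quotient monoid (gword V M) / gp_cong E M. *)
Inductive gp_cong {V : Type} (E : V -> V -> Prop) (M : V -> monoid)
  : gword V M -> gword V M -> Prop :=
| gpc_base x y : gp_basic E M x y -> gp_cong E M x y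
| gpc_refl x : gp_cong E M x x
| gpc_sym x y : gp_cong E M x y -> gp_cong E M y x
| gpc_trans x y z : gp_cong E M x y -> gp_cong E M y z -> gp_cong E M x z
| gpc_ctx a b x y : gp_cong E M x y -> gp_cong E M (a ++ x ++ b) (a ++ y ++ b).

(* The graph product of the M embeds in the graph product of the G:
   an injective monoid homomorphism between the quotient monoids, given
   on representatives (well defined, injective, multiplicative, unital). *)
Definition gp_embeddable {V : Type} (E : V -> V -> Prop)
  (M G : V -> monoid) : Prop :=
  exists phi : gword V M -> gword V G,
    (forall w w', gp_cong E M w w' -> gp_cong E G (phi w) (phi w')) /\
    (forall w w', gp_cong E G (phi w) (phi w') -> gp_cong E M w w') /\
    gp_cong E G (phi []) [] /\
    (forall w w', gp_cong E G (phi (w ++ w')) (phi w ++ phi w')).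

(* Main.v *)
Require Import Defs.
From Stdlib Require Import List Classical IndefiniteDescription ClassicalDescription Eqdep Lia Arith Wf_nat.
Import ListNotations.

Section Trace.
Variable V : Type.
Variable E : V -> V -> Prop.
Hypothesis Eirr : forall v, ~ E v v.
Hypothesis Esym : forall u v, E u v -> E v u.
Variable M : V -> monoid.

Definition L := {v : V & M v}.
Definition vtx (x : L) : V := projT1 x.
Definition indep (x y : L) : Prop := E (vtx x) (vtx y).

Definition swap1 (w w' : list L) : Prop :=
  exists a b x y, w = a ++ x :: y :: b /\ w' = a ++ y :: x :: b /\ indep x y.

Inductive sh : list L -> list L -> Prop :=
| sh_refl w : sh w w
| sh_step w1 w2 w3 : sh w1 w2 -> swap1 w2 w3 -> sh w1 w3.

Lemma swap1_sym w w' : swap1 w w' -> swap1 w' w.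
Proof.
  intros (a & b & x & y & -> & -> & H). exists a, b, y, x. repeat split; auto.
  unfold indep in *; auto.
Qed.

Lemma sh_trans a b c : sh a b -> sh b c -> sh a c.
Proof. intros H1 H2; induction H2; eauto using sh. Qed.

Lemma sh_one a b : swap1 a b -> sh a b.
Proof. intros; eapply sh_step; eauto using sh. Qed.

Lemma sh_sym a b : sh a b -> sh b a.
Proof.
  induction 1. constructor.
  eapply sh_trans; [apply sh_one, swap1_sym; eauto | auto].
Qed.

Lemma sh_ctx a b w w' : sh w w' -> sh (a ++ w ++ b) (a ++ w' ++ b).
Proof.
  induction 1. constructor.
  eapply sh_step; eauto.
  destruct H0 as (a0 & b0 & x & y & -> & -> & Hi).
  exists (a ++ a0), (b0 ++ b), x, y. repeat rewrite <- app_assoc. simpl. auto.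
Qed.

Lemma sh_appr w w' b : sh w w' -> sh (w ++ b) (w' ++ b).
Proof. intros H. apply (sh_ctx [] b) in H. exact H. Qed.
Lemma sh_appl a w w' : sh w w' -> sh (a ++ w) (a ++ w').
Proof. intros H. apply (sh_ctx a []) in H. rewrite !app_nil_r in H. exact H. Qed.

Lemma sh_len a b : sh a b -> length a = length b.
Proof.
  induction 1; auto. destruct H0 as (a0 & b0 & x & y & -> & -> & _).
  rewrite IHsh, !length_app. simpl. lia.
Qed.

Lemma sh_swap_end t x y : indep x y -> sh (t ++ [x; y]) (t ++ [y; x]).
Proof. intros H. apply sh_one. exists t, [], x, y. auto. Qed.

Lemma sh_swap2 t x y : indep x y -> sh ((t ++ [x]) ++ [y]) ((t ++ [y]) ++ [x]).
Proof. intros H. rewrite <- !app_assoc. simpl. now apply sh_swap_end. Qed.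

Lemma proj_aux n : forall r x s y, length r <= n -> sh (r ++ [x]) (s ++ [y]) ->
  (x = y /\ sh r s) \/ (indep x y /\ exists t, sh r (t ++ [y]) /\ sh s (t ++ [x])).
Proof.
  induction n as [n IHn] using lt_wf_ind.
  intros r x s y Hlen H.
  remember (r ++ [x]) as w1. remember (s ++ [y]) as w3.
  revert s y Heqw3. induction H; intros s y Heq3.
  - subst. apply app_inj_tail in Heq3 as [-> ->]. left; split; auto; constructor.
  - destruct H0 as (a & b & p & q & Hm & Hw3 & Hpq).
    destruct (exists_last (l := a ++ p :: q :: b)) as [m' [z Hmz]]. { destruct a; discriminate. }
    specialize (IHsh Heqw1 m' z (eq_trans Hm Hmz)).
    subst w3. destruct b as [|b0 b'] using rev_ind.
    +
      assert (Hm2 : (a ++ [p]) ++ [q] = m' ++ [z]) by (rewrite <- Hmz, <- app_assoc; reflexivity).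
      apply app_inj_tail in Hm2 as [Hm' Hz].
      assert (Hs : s ++ [y] = (a ++ [q]) ++ [p]) by (rewrite <- app_assoc; simpl; congruence).
      apply app_inj_tail in Hs as [Hs Hy]. subst m' z s y.
      destruct IHsh as [[-> Hr] | [Hxz [t [Hr Ht]]]].
      * right. split. unfold indep in *; auto. exists a. split; auto. constructor.
      * assert (Hlt : length t < n).
        { apply sh_len in Hr. rewrite length_app in Hr. simpl in Hr. lia. }
        destruct (IHn _ Hlt t x a p (le_n _) (sh_sym _ _ Ht)) as [[-> Hta] | [Hxp [u [Hu1 Hu2]]]].
        -- left. split; auto. eapply sh_trans; [exact Hr|]. apply sh_appr; auto.
        -- right. split; auto. exists (u ++ [q]). split.
           ++ eapply sh_trans; [exact Hr|]. eapply sh_trans; [apply sh_appr, Hu1|].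
              apply sh_swap2. unfold indep in *; auto.
           ++ eapply sh_trans; [apply sh_appr, Hu2|]. apply sh_swap2. auto.
    + clear IHb'.
      assert (Hm2 : (a ++ p :: q :: b') ++ [b0] = m' ++ [z]) by (rewrite <- Hmz, <- app_assoc; reflexivity).
      apply app_inj_tail in Hm2 as [Hm' Hz].
      assert (Hs : s ++ [y] = (a ++ q :: p :: b') ++ [b0]) by (rewrite <- app_assoc; simpl; congruence).
      apply app_inj_tail in Hs as [Hs Hy]. subst m' z s y.
      assert (Hsw : sh (a ++ p :: q :: b') (a ++ q :: p :: b')).
      { apply sh_one. exists a, b', p, q. auto. }
      destruct IHsh as [[-> Hr] | [Hxz [t [Hr Ht]]]].
      * left. split; auto. eapply sh_trans; eauto.
      * right. split; auto. exists t. split; auto. eapply sh_trans; [apply sh_sym, Hsw|]. auto.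
Qed.
Lemma proj r x s y : sh (r ++ [x]) (s ++ [y]) ->
  (x = y /\ sh r s) \/ (indep x y /\ exists t, sh r (t ++ [y]) /\ sh s (t ++ [x])).
Proof. apply (proj_aux (length r)); auto. Qed.

Lemma levi q : forall r x p, sh (r ++ [x]) (p ++ q) ->
  (exists q', sh q (q' ++ [x]) /\ sh r (p ++ q')) \/
  (exists p', sh p (p' ++ [x]) /\ sh r (p' ++ q) /\ Forall (indep x) q).
Proof.
  induction q as [|w q0 IH] using rev_ind; intros r x p H.
  - right. exists r. rewrite app_nil_r in *. split; [apply sh_sym; auto|]. split; [constructor|auto].
  - rewrite app_assoc in H. destruct (proj _ _ _ _ H) as [[-> Hr] | [Hxw [t [Hr Ht]]]].
    + left. exists q0. split; [constructor|auto].
    + destruct (IH t x p (sh_sym _ _ Ht)) as [[q' [Hq Htq]] | [p' [Hp [Htp Hf]]]].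
      * left. exists (q' ++ [w]). split.
        -- eapply sh_trans; [apply sh_appr, Hq|]. apply sh_swap2; auto.
        -- eapply sh_trans; [exact Hr|]. rewrite app_assoc. apply sh_appr; auto.
      * right. exists p'. split; auto. split.
        -- eapply sh_trans; [exact Hr|]. rewrite app_assoc. apply sh_appr; auto.
        -- apply Forall_app; split; auto.
Qed.

Lemma move q : forall t z, Forall (indep z) q -> sh (t ++ z :: q) (t ++ q ++ [z]).
Proof.
  induction q as [|w q IH]; intros t z H; simpl. constructor.
  inversion H; subst. eapply sh_trans.
  - apply sh_one. exists t, q, z, w. auto.
  - specialize (IH (t ++ [w]) z H3). rewrite <- !app_assoc in IH. exact IH.
Qed.

Definition nonid (y : L) : Prop := projT2 y <> mone (M (projT1 y)).
Definition Inv0 (p : list L) : Prop := forall p' y, sh p (p' ++ [y]) ->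
  nonid y /\ forall p'' z, sh p' (p'' ++ [z]) -> vtx z <> vtx y.
Definition Inv (r : list L) : Prop := forall p q, sh r (p ++ q) -> Inv0 p.
Definition noend (v : V) (r : list L) : Prop := forall r' y, sh r (r' ++ [y]) -> vtx y <> v.

Lemma Inv_sh r r' : sh r r' -> Inv r -> Inv r'.
Proof. intros H1 H2 p q H. apply (H2 p q). eapply sh_trans; eauto. Qed.

Lemma Inv_prefix r e : Inv (r ++ e) -> Inv r.
Proof. intros H p q Hs. apply (H p (q ++ e)). rewrite app_assoc. apply sh_appr; auto. Qed.

Lemma Inv_Inv0 r : Inv r -> Inv0 r.
Proof. intros H. apply (H r []). rewrite app_nil_r. constructor. Qed.

Lemma Inv_nil : Inv [].
Proof.
  intros p q H. apply sh_len in H. rewrite length_app in H. destruct p; [|simpl in H; lia].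
  intros p' y H'. apply sh_len in H'. rewrite length_app in H'. simpl in H'. lia.
Qed.

Lemma Inv_snoc r v (d : M v) : Inv r -> noend v r -> d <> mone (M v) -> Inv (r ++ [existT _ v d]).
Proof.
  intros Hr Hne Hd p q H. set (x := existT _ v d) in *.
  destruct (levi q r x p H) as [[q' [Hq Hrp]] | [p' [Hp [Hrp Hf]]]].
  - apply (Hr p q'); auto.
  - intros p1 y Hy. assert (Hpp := sh_trans _ _ _ (sh_sym _ _ Hp) Hy).
    destruct (proj _ _ _ _ Hpp) as [[<- Hp1] | [Hxy [t [Ht1 Ht2]]]].
    + split; [exact Hd|]. intros p'' z Hz Hzv. simpl in Hzv.
      apply (Hne (p'' ++ q) z); auto.
      eapply sh_trans; [exact Hrp|]. eapply sh_trans; [apply sh_appr, (sh_trans _ _ _ Hp1 Hz)|].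
      rewrite <- !app_assoc. simpl. apply move.
      eapply Forall_impl; [|exact Hf]. intros a Ha. unfold indep in *. rewrite Hzv. exact Ha.
    + assert (HI : Inv0 (t ++ [y])).
      { apply (Hr _ q). eapply sh_trans; [exact Hrp|]. apply sh_appr; auto. }
      destruct (HI t y (sh_refl _)) as [Hny Hno].
      split; [exact Hny|]. intros p'' z Hz Hzy.
      assert (Hq := sh_trans _ _ _ (sh_sym _ _ Ht2) Hz).
      destruct (proj _ _ _ _ Hq) as [[<- _] | [Hxz [t' [Ht' _]]]].
      * unfold indep in Hxy. rewrite <- Hzy in Hxy. apply (Eirr _ Hxy).
      * apply (Hno t' z Ht' Hzy).
Qed.
Definition mk (v : V) (s : M v) : list L :=
  if excluded_middle_informative (s = mone (M v)) then [] else [existT _ v s].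

Lemma mk_one v : mk v (mone (M v)) = [].
Proof. unfold mk. destruct excluded_middle_informative; congruence. Qed.
Lemma mk_nid v s : s <> mone (M v) -> mk v s = [existT _ v s].
Proof. unfold mk. destruct excluded_middle_informative; congruence. Qed.

Lemma Dec r v : Inv r -> exists r0 s, sh r (r0 ++ mk v s) /\ noend v r0.
Proof.
  intros Hr. destruct (classic (exists r' y, sh r (r' ++ [y]) /\ vtx y = v)) as [[r' [[v' c] [H Hv]]] | Hn].
  - simpl in Hv. subst v'. destruct (Inv_Inv0 _ Hr r' _ H) as [Hc Hno].
    exists r', c. rewrite mk_nid by exact Hc. split; auto.
  - exists r, (mone (M v)). rewrite mk_one, app_nil_r. split; [constructor|].
    intros r' y Hy Hv. apply Hn. eauto.
Qed.

Lemma Uniq v r0 s r1 s1 : sh (r0 ++ mk v s) (r1 ++ mk v s1) -> noend v r0 -> noend v r1 ->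
  s = s1 /\ sh r0 r1.
Proof.
  intros H H0 H1.
  destruct (classic (s = mone (M v))) as [Hs|Hs]; destruct (classic (s1 = mone (M v))) as [Hs1|Hs1].
  - subst. rewrite mk_one, !app_nil_r in H. auto.
  - subst s. rewrite mk_one, app_nil_r, mk_nid in H by auto. exfalso. now apply (H0 _ _ H).
  - subst s1. rewrite mk_one, app_nil_r, mk_nid in H by auto. exfalso.
    now apply (H1 _ _ (sh_sym _ _ H)).
  - rewrite !mk_nid in H by auto. destruct (proj _ _ _ _ H) as [[He Hr] | [Hi _]].
    + apply inj_pair2 in He. auto.
    + exfalso. apply (Eirr v Hi).
Qed.

Definition decP (r : list L) (v : V) (p : list L * M v) : Prop :=
  Inv r -> sh r (fst p ++ mk v (snd p)) /\ noend v (fst p).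

Lemma decP_ex r v : exists p, decP r v p.
Proof.
  destruct (classic (Inv r)) as [H|H].
  - destruct (Dec r v H) as [r0 [s Hs]]. exists (r0, s). intros _. exact Hs.
  - exists ([], mone (M v)). intros H'. contradiction.
Qed.

Definition dec (r : list L) (v : V) : list L * M v :=
  proj1_sig (constructive_indefinite_description _ (decP_ex r v)).

Lemma dec_spec r v : decP r v (dec r v).
Proof. unfold dec. destruct constructive_indefinite_description; auto. Qed.

Definition act (r : list L) (x : L) : list L :=
  match x with existT _ v a => fst (dec r v) ++ mk v (mop (snd (dec r v)) a) end.

Lemma Spec r v r0 s a : Inv r -> sh r (r0 ++ mk v s) -> noend v r0 ->
  sh (act r (existT _ v a)) (r0 ++ mk v (mop s a)).
Proof.
  intros Hr H Hn. simpl. destruct (dec_spec r v Hr) as [H1 H2].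
  destruct (Uniq v _ _ _ _ (sh_trans _ _ _ (sh_sym _ _ H1) H) H2 Hn) as [-> Hs].
  apply sh_appr; auto.
Qed.

Lemma Inv_mk r0 v d : Inv r0 -> noend v r0 -> Inv (r0 ++ mk v d).
Proof.
  intros H1 H2. destruct (classic (d = mone (M v))) as [->|Hd].
  - rewrite mk_one, app_nil_r; auto.
  - rewrite mk_nid by auto. apply Inv_snoc; auto.
Qed.

Lemma Inv_act r x : Inv r -> Inv (act r x).
Proof.
  intros Hr. destruct x as [v a]. destruct (Dec r v Hr) as [r0 [s [H Hn]]].
  eapply Inv_sh; [apply sh_sym, (Spec _ _ _ _ a Hr H Hn)|].
  apply Inv_mk; auto. apply (Inv_prefix _ (mk v s)). eapply Inv_sh; eauto.
Qed.

Lemma act_sh r1 r2 x : Inv r1 -> sh r1 r2 -> sh (act r1 x) (act r2 x).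
Proof.
  intros Hr H. destruct x as [v a]. destruct (Dec r1 v Hr) as [r0 [s [H0 Hn]]].
  eapply sh_trans; [apply (Spec _ _ _ _ a Hr H0 Hn)|]. apply sh_sym.
  apply Spec; auto. eapply Inv_sh; eauto. eapply sh_trans; [apply sh_sym, H|]; auto.
Qed.

Lemma R1 r v : Inv r -> sh (act r (existT _ v (mone (M v)))) r.
Proof.
  intros Hr. destruct (Dec r v Hr) as [r0 [s [H Hn]]].
  eapply sh_trans; [apply (Spec _ _ _ _ _ Hr H Hn)|]. rewrite mone_r. apply sh_sym; auto.
Qed.

Lemma R2 r v a b : Inv r ->
  sh (act (act r (existT _ v a)) (existT _ v b)) (act r (existT _ v (mop a b))).
Proof.
  intros Hr. destruct (Dec r v Hr) as [r0 [s [H Hn]]].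
  pose proof (Spec _ _ _ _ a Hr H Hn) as H1.
  eapply sh_trans; [apply (Spec _ _ _ _ b (Inv_act _ _ Hr) H1 Hn)|].
  rewrite <- massoc. apply sh_sym, Spec; auto.
Qed.

Lemma NE u v r s : E u v -> noend v r -> noend v (r ++ mk u s).
Proof.
  intros Huv Hn. destruct (classic (s = mone (M u))) as [->|Hs].
  - rewrite mk_one, app_nil_r; auto.
  - rewrite mk_nid by auto. intros r' y Hy Hv. destruct (proj _ _ _ _ Hy) as [[<- _]|[_ [t [Ht _]]]].
    + simpl in Hv. subst. apply (Eirr _ Huv).
    + apply (Hn _ _ Ht Hv).
Qed.

Lemma mk_comm u v s t : E u v -> sh (mk u s ++ mk v t) (mk v t ++ mk u s).
Proof.
  intros Huv. destruct (classic (s = mone (M u))) as [->|Hs].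
  - rewrite mk_one, app_nil_r. constructor.
  - destruct (classic (t = mone (M v))) as [->|Ht].
    + rewrite mk_one, app_nil_r. constructor.
    + rewrite !mk_nid by auto. apply (sh_swap_end []). exact Huv.
Qed.

Lemma Two r u v r00 s t m n : Inv r -> E u v -> sh r (r00 ++ mk u s ++ mk v t) ->
  noend u r00 -> noend v r00 ->
  sh (act (act r (existT _ u m)) (existT _ v n)) (r00 ++ mk u (mop s m) ++ mk v (mop t n)).
Proof.
  intros Hr Huv H Hu Hv.
  assert (H1 : sh r ((r00 ++ mk v t) ++ mk u s)).
  { eapply sh_trans; [exact H|]. rewrite <- app_assoc. apply sh_appl, mk_comm; auto. }
  pose proof (Spec _ _ _ _ m Hr H1 (NE v u _ _ (Esym _ _ Huv) Hu)) as H2.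
  assert (H3 : sh (act r (existT _ u m)) ((r00 ++ mk u (mop s m)) ++ mk v t)).
  { eapply sh_trans; [exact H2|]. rewrite <- !app_assoc. apply sh_appl, mk_comm; auto. }
  eapply sh_trans; [apply (Spec _ _ _ _ n (Inv_act _ _ Hr) H3 (NE u v _ _ Huv Hv))|].
  rewrite <- app_assoc. constructor.
Qed.

Lemma R3 r u v m n : Inv r -> E u v ->
  sh (act (act r (existT _ u m)) (existT _ v n)) (act (act r (existT _ v n)) (existT _ u m)).
Proof.
  intros Hr Huv. destruct (Dec r v Hr) as [r0 [t [H Hn]]].
  assert (Hr0 : Inv r0) by (apply (Inv_prefix _ (mk v t)); eapply Inv_sh; eauto).
  destruct (Dec r0 u Hr0) as [r00 [s [H0 Hn0]]].
  assert (Hv : noend v r00).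
  { intros p z Hz Hzv. apply (Hn (p ++ mk u s) z); auto.
    eapply sh_trans; [exact H0|]. eapply sh_trans; [apply sh_appr, Hz|].
    rewrite <- !app_assoc. simpl. apply move.
    unfold mk. destruct excluded_middle_informative; constructor; auto.
    unfold indep. simpl. rewrite Hzv. apply Esym; auto. }
  assert (Hr' : sh r (r00 ++ mk u s ++ mk v t)).
  { eapply sh_trans; [exact H|]. rewrite app_assoc. apply sh_appr; auto. }
  eapply sh_trans; [apply (Two _ _ _ _ _ _ m n Hr Huv Hr' Hn0 Hv)|].
  eapply sh_trans; [apply sh_appl, mk_comm; auto|].
  apply sh_sym, Two; auto. eapply sh_trans; [exact Hr'|]. apply sh_appl, mk_comm; auto.
Qed.
Lemma fold_Inv w : forall r, Inv r -> Inv (fold_left act w r).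
Proof. induction w; simpl; intros; auto. apply IHw, Inv_act; auto. Qed.

Lemma fold_sh w : forall r1 r2, Inv r1 -> sh r1 r2 -> sh (fold_left act w r1) (fold_left act w r2).
Proof.
  induction w; simpl; intros; auto. apply IHw. apply Inv_act; auto. apply act_sh; auto.
Qed.

Lemma cong_fold w w' : gp_cong E M w w' -> forall r1 r2, Inv r1 -> sh r1 r2 ->
  sh (fold_left act w r1) (fold_left act w' r2).
Proof.
  induction 1; intros r1 r2 Hr H12.
  - destruct H as [v|v a b|u v m n Huv]; cbn [fold_left].
    + eapply sh_trans; [apply R1; auto|]; auto.
    + eapply sh_trans; [apply R2; auto|]. apply act_sh; auto.
    + eapply sh_trans; [apply R3; auto|]. apply act_sh; [apply Inv_act; auto|]. apply act_sh; auto.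
  - apply fold_sh; auto.
  - apply sh_sym, IHgp_cong. eapply Inv_sh; eauto. apply sh_sym; auto.
  - eapply sh_trans; [apply IHgp_cong1; eauto|]. apply IHgp_cong2; [eapply Inv_sh; eauto|constructor].
  - rewrite !fold_left_app. apply fold_sh.
    + apply fold_Inv, fold_Inv; auto.
    + apply IHgp_cong; [apply fold_Inv; auto|]. apply fold_sh; auto.
Qed.

Definition nf (w : list L) := fold_left act w [].

Lemma sh_cong a b : sh a b -> gp_cong E M a b.
Proof.
  induction 1. apply gpc_refl. eapply gpc_trans; [exact IHsh|].
  destruct H0 as (a0 & b0 & x & y & -> & -> & Hi).
  destruct x as [u m], y as [v n].
  apply (gpc_ctx _ _ a0 b0 [existT _ u m; existT _ v n] [existT _ v n; existT _ u m]). apply gpc_base, gpb_comm. exact Hi.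
Qed.

Lemma cong_app_r a b c : gp_cong E M a b -> gp_cong E M (a ++ c) (b ++ c).
Proof. intros H. apply (gpc_ctx _ _ [] c) in H. exact H. Qed.
Lemma cong_app_l a b c : gp_cong E M a b -> gp_cong E M (c ++ a) (c ++ b).
Proof. intros H. apply (gpc_ctx _ _ c []) in H. rewrite !app_nil_r in H. exact H. Qed.

Lemma mk_cong v s a : gp_cong E M (mk v s ++ [existT _ v a]) (mk v (mop s a)).
Proof.
  assert (Hb : forall b, gp_cong E M [existT _ v b] (mk v b)).
  { intros b. destruct (classic (b = mone (M v))) as [->|Hb].
    - rewrite mk_one. apply gpc_base, gpb_one.
    - rewrite mk_nid by auto. apply gpc_refl. }
  destruct (classic (s = mone (M v))) as [->|Hs].
  - rewrite mk_one, mone_l. simpl. auto.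
  - rewrite mk_nid by auto. simpl. eapply gpc_trans; [apply gpc_base, gpb_mul|]. auto.
Qed.

Lemma act_cong r x : Inv r -> gp_cong E M (r ++ [x]) (act r x).
Proof.
  intros Hr. destruct x as [v a]. destruct (Dec r v Hr) as [r0 [s [H Hn]]].
  eapply gpc_trans; [apply cong_app_r, sh_cong, H|].
  eapply gpc_trans; [|apply gpc_sym, sh_cong, (Spec _ _ _ _ a Hr H Hn)].
  rewrite <- app_assoc. apply cong_app_l, mk_cong.
Qed.

Lemma nf_cong_gen w : forall r, Inv r -> gp_cong E M (r ++ w) (fold_left act w r).
Proof.
  induction w as [|x w IH]; intros r Hr; simpl.
  - rewrite app_nil_r. apply gpc_refl.
  - eapply gpc_trans; [|apply IH, Inv_act; auto].
    change (x :: w) with ([x] ++ w). rewrite app_assoc. apply cong_app_r, act_cong; auto.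
Qed.

Lemma nf_cong w : gp_cong E M w (nf w).
Proof. apply (nf_cong_gen w [] Inv_nil). Qed.

Lemma nf_Inv w : Inv (nf w).
Proof. apply fold_Inv, Inv_nil. Qed.

Lemma nf_complete w w' : gp_cong E M w w' -> sh (nf w) (nf w').
Proof. intros H. apply cong_fold; auto. apply Inv_nil. constructor. Qed.
End Trace.

Section Map.
Variable V : Type.
Variable E : V -> V -> Prop.
Hypothesis Eirr : forall v, ~ E v v.
Hypothesis Esym : forall u v, E u v -> E v u.
Variables M N : V -> monoid.
Variable f : forall v, M v -> N v.
Hypothesis fhom : forall v, monoid_hom (M v) (N v) (f v).
Hypothesis finj : forall v x y, f v x = f v y -> x = y.

Definition F (x : L V M) : L V N := existT _ (projT1 x) (f _ (projT2 x)).

Lemma map_sh a b : sh V E M a b -> sh V E N (map F a) (map F b).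
Proof.
  induction 1. constructor. eapply sh_step; eauto.
  destruct H0 as (a0 & b0 & x & y & -> & -> & Hi).
  exists (map F a0), (map F b0), (F x), (F y). rewrite !map_app. simpl. auto.
Qed.

Lemma map_sh_refl a q : sh V E N (map F a) q -> exists a', q = map F a' /\ sh V E M a a'.
Proof.
  remember (map F a) as w. intros H. revert a Heqw. induction H; intros a Heq.
  - exists a. split; auto. constructor.
  - destruct (IHsh a Heq) as [a2 [-> Ha2]].
    destruct H0 as (a0 & b0 & x & y & Hm & -> & Hi).
    apply map_eq_app in Hm as (l1 & l2 & -> & <- & Hm).
    apply map_eq_cons in Hm as (x' & l3 & -> & <- & Hm).
    apply map_eq_cons in Hm as (y' & l4 & -> & <- & <-).
    exists (l1 ++ y' :: x' :: l4). split. rewrite map_app. reflexivity.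
    eapply sh_step; eauto. exists l1, l4, x', y'. auto.
Qed.

Lemma F_inj x y : F x = F y -> x = y.
Proof.
  destruct x as [u a], y as [v b]. unfold F. simpl. intros H.
  assert (u = v) by exact (f_equal (@projT1 _ _) H). subst v.
  apply inj_pair2 in H. apply finj in H. subst; auto.
Qed.

Lemma map_F_inj a b : map F a = map F b -> a = b.
Proof.
  revert b; induction a; destruct b; simpl; intros H; try discriminate; auto.
  injection H; intros. f_equal; auto. apply F_inj; auto.
Qed.

Lemma f_one v s : f v s = mone (N v) <-> s = mone (M v).
Proof.
  destruct (fhom v) as [H1 _]. split; intros H.
  - apply finj. congruence.
  - subst; auto.
Qed.

Lemma mk_map v s : map F (mk V M v s) = mk V N v (f v s).
Proof.
  destruct (classic (s = mone (M v))) as [->|Hs].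
  - rewrite mk_one. destruct (fhom v) as [-> _]. rewrite mk_one. reflexivity.
  - rewrite !mk_nid; auto. rewrite f_one; auto.
Qed.

Lemma noend_map v r : noend V E M v r -> noend V E N v (map F r).
Proof.
  intros H r' y Hy Hv. destruct (map_sh_refl _ _ Hy) as [a' [Ha' Hs]].
  symmetry in Ha'. apply map_eq_app in Ha' as (l1 & l2 & -> & <- & Hl2).
  destruct l2 as [|y' [|]]; simpl in Hl2; try discriminate. injection Hl2 as <-.
  apply (H l1 y' Hs). exact Hv.
Qed.

Lemma act_map r x : Inv V E M r -> Inv V E N (map F r) ->
  sh V E N (act V E N (map F r) (F x)) (map F (act V E M r x)).
Proof.
  intros Hr HrN. destruct x as [v a].
  destruct (Dec V E M r v Hr) as [r0 [s [H Hn]]].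
  pose proof (Spec V E Eirr Esym M r v r0 s a Hr H Hn) as HM.
  assert (HN : sh V E N (map F r) (map F r0 ++ mk V N v (f v s))).
  { rewrite <- mk_map, <- map_app. apply map_sh; auto. }
  unfold F at 2. simpl.
  eapply sh_trans; [apply (Spec V E Eirr Esym N _ v _ _ _ HrN HN (noend_map _ _ Hn))|].
  destruct (fhom v) as [_ Hm]. rewrite <- Hm, <- mk_map, <- map_app.
  apply map_sh, sh_sym; auto.
Qed.

Lemma nf_map w : sh V E N (nf V E N (map F w)) (map F (nf V E M w)).
Proof.
  induction w as [|x w IH] using rev_ind.
  - constructor.
  - unfold nf in *. rewrite map_app, !fold_left_app. cbn [fold_left map].
    assert (HI : Inv V E N (fold_left (act V E N) (map F w) [])) by apply (nf_Inv V E Eirr Esym N).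
    eapply sh_trans; [apply (act_sh V E Eirr Esym N _ _ _ HI IH)|].
    apply act_map. apply (nf_Inv V E Eirr Esym M).
    eapply Inv_sh; eauto.
Qed.

Lemma map_cong w w' : gp_cong E M w w' -> gp_cong E N (map F w) (map F w').
Proof.
  induction 1.
  - destruct H; simpl; apply gpc_base; unfold F; simpl.
    + destruct (fhom v) as [-> _]. apply gpb_one.
    + destruct (fhom v) as [_ ->]. apply gpb_mul.
    + apply gpb_comm; auto.
  - apply gpc_refl.
  - apply gpc_sym; auto.
  - eapply gpc_trans; eauto.
  - rewrite !map_app. apply gpc_ctx; auto.
Qed.

Lemma map_refl w w' : gp_cong E N (map F w) (map F w') -> gp_cong E M w w'.
Proof.
  intros H. apply (nf_complete V E Eirr Esym N) in H.
  pose proof (sh_trans _ _ _ _ _ _ (sh_sym V E Esym N _ _ (nf_map w)) (sh_trans _ _ _ _ _ _ H (nf_map w'))) as H2.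
  destruct (map_sh_refl _ _ H2) as [a' [Ha' Hs]]. apply map_F_inj in Ha'. subst a'.
  eapply gpc_trans; [apply (nf_cong V E Eirr Esym M)|].
  eapply gpc_trans; [apply sh_cong; exact Hs|]. apply gpc_sym, (nf_cong V E Eirr Esym M).
Qed.
End Map.

Theorem corollary1p8 (V : Type) (E : V -> V -> Prop) (M G : V -> monoid) :
  is_graph E ->
  (forall v, is_group (G v)) ->
  (forall v, monoid_embeddable (M v) (G v)) ->
  gp_embeddable E M G.
Proof.
  intros [Eirr Esym] _ Hemb.
  set (f := fun v => proj1_sig (constructive_indefinite_description _ (Hemb v))).
  assert (Hf : forall v, monoid_hom (M v) (G v) (f v) /\ forall x y, f v x = f v y -> x = y).
  { intros v. unfold f. destruct constructive_indefinite_description; auto. }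
  exists (map (F V M G f)). split; [|split; [|split]].
  - apply map_cong. intros v; apply Hf.
  - apply map_refl; auto. intros v; apply Hf. intros v; apply Hf.
  - apply gpc_refl.
  - intros w w'. rewrite map_app. apply gpc_refl.
Qed.
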